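(* Under the hypotheses $\frac{d\lambda}{dt}=\alpha_0\lambda$ ($\alpha_0\ne0$) and $\frac{d}{dt}m_j=\alpha_0jm_j+\alpha_1m_{j+1}+\alpha_2m_{j-1}$ for all $j\in\mathbb Z$, with all required inverses existing, the recurrence coefficients satisfy the noncommutative nonisospectral mixed relativistic Toda lattice: $$\frac{d}{dt}a_n=\alpha_0a_n+\alpha_1(-a_{n+1}a_n+a_na_{n-1}+b_na_n-a_nb_{n-1})+\alpha_2(b_n^{-1}a_n-a_nb_{n-1}^{-1}),$$ $$\frac{d}{dt}b_n=\alpha_0b_n+\alpha_1(b_na_n-a_{n+1}b_n)+\alpha_2(b_{n+1}^{-1}a_{n+1}-a_nb_{n-1}^{-1}).$$ The boundary conventions are $a_0=0$ and $P_{-1}=0$.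
   Context: $R$ is a skew field containing moments $m_i(t)$, $i\in\mathbb Z$, with an involution $*$ and a derivation $\frac{d}{dt}$. The pairing is $\langle\sum a_i\lambda^i,\sum b_j\lambda^j\rangle=\sum a_im_{i-j}b_j^*$. Let $\Lambda_{n-1}=(m_{i-j})_{i,j=0}^{n-1}$ (invertible) and $\theta_n=(m_n,\dots,m_1)$. The polynomials are $P_n=\lambda^n-\theta_n\Lambda_{n-1}^{-1}(1,\dots,\lambda^{n-1})^T$, the monic Laurent biorthogonal polynomials. Further, $$H_n=m_0-\theta_n\Lambda_{n-1}^{-1}(m_{-n},\dots,m_{-1})^T,\qquad \tau_n=m_{n+1}-\theta_n\Lambda_{n-1}^{-1}(m_1,\dots,m_n)^T,$$ $$a_n=-\tau_n\tau_{n-1}^{-1},\qquad b_n=a_nH_{n-1}H_n^{-1}.$$ The recurrence coefficients satisfy $\lambda(P_n+a_nP_{n-1})=P_{n+1}+b_nP_n$. The spectral parameter $\lambda=\lambda(t)$ is time-dependent. *)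

(* Defs.v *)
(* Matrix inverses over a noncommutative
   ring are not available in MathComp (invmx needs commutativity), so the
   inverses of the Toeplitz moment matrices are given as a parameter Linv
   together with the two-sided inverse property (inverses are unique). *)
From HB Require Import structures.
From mathcomp Require Import all_boot all_order all_algebra.
Set Implicit Arguments. Unset Strict Implicit. Unset Printing Implicit Defensive.
Import Order.TTheory GRing.Theory Num.Theory.
Local Open Scope ring_scope.

Section LBP.
Variables (R : unitRingType) (m : int -> R) (Linv : forall n : nat, 'M[R]_n).

(* Lambda_{n-1} = (m_{i-j})_{i,j=0}^{n-1}, an n x n matrix *)
Definition Lam (n : nat) : 'M[R]_n :=
  \matrix_(i < n, j < n) m ((i : nat)%:Z - (j : nat)%:Z).

Definition theta (n : nat) : 'rV[R]_n := \row_(k < n) m (n%:Z - (k : nat)%:Z).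

Definition colH (n : nat) : 'cV[R]_n := \col_(k < n) m ((k : nat)%:Z - n%:Z).

Definition colT (n : nat) : 'cV[R]_n := \col_(k < n) m ((k : nat)%:Z + 1).

Definition Hn (n : nat) : R :=
  m 0 - (theta n *m Linv n *m colH n) 0 0.

Definition taun (n : nat) : R :=
  m (n%:Z + 1) - (theta n *m Linv n *m colT n) 0 0.

Definition an (n : nat) : R :=
  if n is k.+1 then - taun k.+1 * (taun k)^-1 else 0.

(* b_n = a_n H_{n-1} H_n^{-1} for n >= 1; b_0 = m_1 m_0^{-1} = tau_0 H_0^{-1},
   the value forced by the recurrence lambda P_0 = P_1 + b_0 P_0 (P_{-1} = 0). *)
Definition bn (n : nat) : R :=
  if n is k.+1 then an k.+1 * Hn k * (Hn k.+1)^-1 else taun 0 * (Hn 0)^-1.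

End LBP.

(* Main.v *)
Require Import Defs.
From HB Require Import structures.
From mathcomp Require Import all_boot all_order all_algebra.
From mathcomp Require Import zify ring.
Import Order.TTheory GRing.Theory Num.Theory.
Local Open Scope ring_scope.

Section Work.
Variables (R : unitRingType) (d : R -> R) (m : int -> R)
    (Linv : forall n : nat, 'M[R]_n) (al0 al1 al2 : R).
Hypothesis unitP : forall x : R, x != 0 -> x \is a GRing.unit.
Hypothesis dD : forall x y : R, d (x + y) = d x + d y.
Hypothesis dM : forall x y : R, d (x * y) = d x * y + x * d y.
Hypothesis c0 : forall x : R, al0 * x = x * al0.
Hypothesis c1 : forall x : R, al1 * x = x * al1.
Hypothesis c2 : forall x : R, al2 * x = x * al2.
Hypothesis dm : forall j : int,
      d (m j) = al0 * j%:~R * m j + al1 * m (j + 1) + al2 * m (j - 1).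
Hypothesis LinvP : forall n : nat, Lam m n *m Linv n = 1%:M /\ Linv n *m Lam m n = 1%:M.
Hypothesis tNZ : forall n : nat, taun m Linv n != 0.
Hypothesis hNZ : forall n : nat, Hn m Linv n != 0.
Hypothesis bNZ : forall n : nat, bn m Linv n != 0.

#[local] Hint Extern 0 (is_true (leq _ _)) => lia : core.

Local Notation t := (taun m Linv).
Local Notation h := (Hn m Linv).
Local Notation a := (an m Linv).
Local Notation b := (bn m Linv).

Lemma d0 : d 0 = 0.
Proof. have H := dD 0 0; rewrite addr0 in H. by apply: (addrI (d 0)); rewrite addr0 -H. Qed.
Lemma d1 : d 1 = 0.
Proof. have H := dM 1 1; rewrite !mul1r mulr1 in H. by apply: (addrI (d 1)); rewrite addr0 -H. Qed.
Lemma dN x : d (- x) = - d x.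
Proof. by apply/eqP; rewrite -subr_eq0 opprK -dD addNr d0. Qed.
Lemma dB x y : d (x - y) = d x - d y.
Proof. by rewrite dD dN. Qed.
Lemma dsum K (F : 'I_K -> R) : d (\sum_(i < K) F i) = \sum_(i < K) d (F i).
Proof. by apply: (big_morph d dD d0). Qed.
Lemma dV x : x \is a GRing.unit -> d (x^-1) = - (x^-1 * d x * x^-1).
Proof.
move=> ux. have : d (x * x^-1) = 0 by rewrite mulrV // d1.
rewrite dM => /eqP; rewrite addr_eq0 => /eqP E.
by rewrite -[d x^-1]mul1r -(mulVr ux) -mulrA -(opprK (x * d x^-1)) -E mulrN mulrA.
Qed.
Lemma dnat (k : nat) : d k%:R = 0.
Proof. by elim: k => [|k IH]; rewrite ?d0 // mulrS dD d1 IH addr0. Qed.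

Lemma intrC (z : int) (x : R) : z%:~R * x = x * z%:~R.
Proof. by rewrite mulrzl mulrzr. Qed.

Lemma unit_t k : t k \is a GRing.unit. Proof. exact: unitP. Qed.
Lemma unit_h k : h k \is a GRing.unit. Proof. exact: unitP. Qed.
Lemma unit_b k : b k \is a GRing.unit. Proof. exact: unitP. Qed.


Definition pr K (c : nat -> R) (j : int) := \sum_(i < K) c i * m (i%:Z - j).
Definition q k := theta m k *m Linv k.
Definition P k (i : nat) : R := (i == k)%:R - \sum_(l < k) (i == l)%:R * q k 0 l.
Definition shift (c : nat -> R) i := if i is i'.+1 then c i' else 0.

Lemma sum_delta K k (F : nat -> R) : (k < K)%N ->
  \sum_(i < K) (i == k :> nat)%:R * F i = F k.
Proof.
move=> kK; rewrite (bigD1 (Ordinal kK)) //= eqxx mul1r big1 ?addr0 // => i ne.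
have -> : (i == k :> nat) = false.
  by apply/negbTE; apply: contra ne => /eqP e; apply/eqP/val_inj.
by rewrite mul0r.
Qed.

Lemma P_hi k i : (k < i)%N -> P k i = 0.
Proof.
move=> ki; rewrite /P big1 ?subr0; first by rewrite (gtn_eqF ki).
move=> l _; have -> : (i == l) = false by apply/negbTE; rewrite neq_ltn (ltn_trans (ltn_ord l) ki) orbT.
by rewrite mul0r.
Qed.

Lemma P_top k : P k k = 1.
Proof.
rewrite /P eqxx big1 ?subr0 // => l _.
by rewrite (gtn_eqF (ltn_ord l)) mul0r.
Qed.

Lemma P_ge k i : (k <= i)%N -> P k i = (i == k)%:R.
Proof.
rewrite leq_eqVlt => /orP[/eqP->|ki]; first by rewrite P_top eqxx.
by rewrite P_hi // (gtn_eqF ki).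
Qed.

Lemma dP_const k i : (k <= i)%N -> d (P k i) = 0.
Proof. by move=> ki; rewrite P_ge // dnat. Qed.

Lemma prP K k j : (k < K)%N ->
  pr K (P k) j = m (k%:Z - j) - \sum_(l < k) q k 0 l * m (l%:Z - j).
Proof.
move=> kK; rewrite /pr /P.
under eq_bigr do rewrite mulrBl.
rewrite sumrB (@sum_delta _ _ (fun i => m (i%:Z - j))) //; congr (_ - _).
under eq_bigr do rewrite mulr_suml.
rewrite exchange_big /=; apply: eq_bigr => l _.
under eq_bigr do rewrite -mulrA.
by rewrite (@sum_delta _ _ (fun i => q k 0 l * m (i%:Z - j))) // (ltn_trans (ltn_ord l) kK).
Qed.

Lemma sumq_Lam k (j : 'I_k) : \sum_(l < k) q k 0 l * m (l%:Z - j%:Z) = m (k%:Z - j%:Z).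
Proof.
have := congr1 (fun M : 'M[R]_(1,k) => M 0 j) (esym (mulmx1 (theta m k))).
rewrite -(proj2 (LinvP k)) mulmxA !mxE => ->.
by apply: eq_bigr => l _; rewrite !mxE.
Qed.

Lemma prP_orth K k (j : nat) : (k < K)%N -> (j < k)%N -> pr K (P k) j%:Z = 0.
Proof.
move=> kK jk; rewrite prP //.
by rewrite (@sumq_Lam k (Ordinal jk)) subrr.
Qed.

Lemma prP_h K k : (k < K)%N -> pr K (P k) k%:Z = h k.
Proof.
move=> kK; rewrite prP // subrr /Hn [in RHS]mxE; congr (_ - _).
by apply: eq_bigr => l _; rewrite /q; congr (_ * _); rewrite mxE.
Qed.

Lemma prP_t K k : (k < K)%N -> pr K (P k) (-1) = t k.
Proof.
move=> kK; rewrite prP // opprK /taun [in RHS]mxE; congr (_ - _).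
by apply: eq_bigr => l _; rewrite /q; congr (_ * _); rewrite mxE; congr (m _); rewrite opprK.
Qed.

Lemma pr_ext K c j : c K = 0 -> pr K.+1 c j = pr K c j.
Proof. by move=> cK; rewrite /pr big_ord_recr /= cK mul0r addr0. Qed.

Lemma pr_shift K c j : pr K.+1 (shift c) j = pr K c (j - 1).
Proof.
rewrite /pr big_ord_recl /= mul0r add0r; apply: eq_bigr => i _ /=.
congr (_ * m _); rewrite /bump /= -addn1 PoszD opprB addrA.
by rewrite [_ + 1]addrC -addrA [1 + _]addrC.
Qed.

Lemma pr_cut K k c j : (k <= K)%N -> (forall i, (k <= i)%N -> c i = 0) ->
  pr K c j = \sum_(i < k) c i * m (i%:Z - j).
Proof.
move=> kK ck; rewrite /pr [RHS](big_ord_widen K (fun i => c i * m (i%:Z - j))) //.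
rewrite [RHS]big_mkcond /=; apply: eq_bigr => i _.
by case: ltnP => // ki; rewrite ck // mul0r.
Qed.

Lemma uniq0 k K c : (k <= K)%N -> (forall i, (k <= i)%N -> c i = 0) ->
  (forall j : nat, (j < k)%N -> pr K c j%:Z = 0) -> forall i, c i = 0.
Proof.
move=> kK ck co i; case: (ltnP i k) => ik; last exact: ck.
pose v : 'rV[R]_k := \row_(l < k) c l.
have v0 : v *m Lam m k = 0.
  apply/rowP => j; rewrite [RHS]mxE; transitivity (pr K c j); last exact: co.
  rewrite (@pr_cut K k c _ kK ck) mxE.
  by apply: eq_bigr => l _; rewrite !mxE.
have : v = 0 by rewrite -[v]mulmx1 -(proj1 (LinvP k)) mulmxA v0 mul0mx.
by move/(congr1 (fun M : 'rV[R]_k => M 0 (Ordinal ik))); rewrite !mxE.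
Qed.


Lemma dpr K c j : d (pr K c j) = pr K (fun i => d (c i)) j
  + al0 * \sum_(i < K) c i * ((i%:Z - j)%:~R * m (i%:Z - j))
  + al1 * pr K c (j - 1) + al2 * pr K c (j + 1).
Proof.
rewrite /pr dsum !mulr_sumr -!big_split; apply: eq_bigr => i _ /=.
rewrite dM dm !mulrDr -!addrA; congr (_ + _).
rewrite !mulrA -c0 -c1 -c2; congr (_ + (_ + _)).
  by congr (_ * m _); lia.
by congr (_ * m _); lia.
Qed.


Lemma pr_eq K c c' j : (forall i, c i = c' i) -> pr K c j = pr K c' j.
Proof. by move=> e; apply: eq_bigr => i _; rewrite e. Qed.
Lemma prD K u v j : pr K (fun i => u i + v i) j = pr K u j + pr K v j.
Proof. by rewrite /pr -big_split; apply: eq_bigr => i _; rewrite mulrDl. Qed.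
Lemma prB K u v j : pr K (fun i => u i - v i) j = pr K u j - pr K v j.
Proof. by rewrite /pr -sumrB; apply: eq_bigr => i _; rewrite mulrBl. Qed.
Lemma prZ K s c j : pr K (fun i => s * c i) j = s * pr K c j.
Proof. by rewrite /pr mulr_sumr; apply: eq_bigr => i _; rewrite mulrA. Qed.
Lemma pr0 K c j : (forall i, c i = 0) -> pr K c j = 0.
Proof. by move=> e; rewrite /pr big1 // => i _; rewrite e mul0r. Qed.

Lemma aE k : a k.+1 = - t k.+1 * (t k)^-1. Proof. by []. Qed.
Lemma bE k : b k.+1 = a k.+1 * h k * (h k.+1)^-1. Proof. by []. Qed.
Lemma b0E : b 0 = t 0 * (h 0)^-1. Proof. by []. Qed.

Lemma at_prev k : a k.+1 * t k = - t k.+1.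
Proof. by rewrite aE -mulrA mulVr ?unit_t // mulr1. Qed.
Lemma bh k : b k.+1 * h k.+1 = a k.+1 * h k.
Proof. by rewrite bE -mulrA mulVr ?unit_h // mulr1. Qed.

Lemma aP0 k i : (k <= i)%N -> a k * P k.-1 i = 0.
Proof.
case: k => [|k] ki; first by rewrite mul0r.
by rewrite P_hi ?mulr0.
Qed.

Lemma recur k j :
  pr k.+3 (P k) (j - 1) + a k * pr k.+3 (P k.-1) (j - 1)
  = pr k.+3 (P k.+1) j + b k * pr k.+3 (P k) j.
Proof.
pose F i := P k i + a k * P k.-1 i.
pose X i := shift F i - P k.+1 i - b k * P k i.
have Fhi i : (k < i)%N -> F i = 0.
  by move=> ki; rewrite /F P_hi // aP0 ?addr0 // ltnW.
have prX j' : pr k.+3 X j' = pr k.+3 (P k) (j' - 1) + a k * pr k.+3 (P k.-1) (j' - 1)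
       - pr k.+3 (P k.+1) j' - b k * pr k.+3 (P k) j'.
  transitivity (pr k.+3 (shift F) j' - pr k.+3 (P k.+1) j' - b k * pr k.+3 (P k) j').
    by rewrite -prZ -!prB.
  rewrite pr_shift -(@pr_ext k.+2 F); last by rewrite Fhi.
  by rewrite /F prD prZ.
have X0 : forall i, X i = 0.
  apply: (@uniq0 k.+1 k.+3); first by lia.
    move=> [|i] //= ki; rewrite /X /shift.
    rewrite leq_eqVlt in ki; case/orP: ki => [/eqP [] ik|ki].
      by rewrite -ik /F P_top aP0 // addr0 P_top P_hi // mulr0 !subr0 subrr.
    by rewrite Fhi // P_hi // P_hi ?mulr0 ?subrr ?subr0 // ltnW.
  move=> [|j'] jk; rewrite prX.
    rewrite (@prP_orth k.+3 k.+1 0) // subr0 sub0r prP_t //.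
    case: k {F X Fhi prX jk} => [|k].
      rewrite (@prP_h 3 0) // b0E mul0r addr0 -mulrA mulVr ?unit_h // mulr1 subrr.
      by [].
    rewrite (@prP_orth k.+4 k.+1 0) // mulr0 subr0 /= prP_t //.
    by rewrite at_prev subrr.
  have -> : (j'.+1)%:Z - 1 = j'%:Z by lia.
  rewrite (@prP_orth k.+3 k.+1 j'.+1) // subr0 prP_orth // add0r.
  case: k {F X Fhi prX} jk => [|k] jk //.
  rewrite [_.-1]/=.
  rewrite ltnS leq_eqVlt in jk; case/orP: jk => [/eqP [] e|jk].
    by rewrite e prP_h // prP_h // -bh subrr.
  by rewrite prP_orth // prP_orth // !mulr0 subrr.
have := prX j; rewrite pr0 // => E.
by apply/eqP; rewrite -subr_eq0 opprD addrA -E.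
Qed.


Lemma pr_intdiff K (c : nat -> R) j (f g : nat -> int) z : (forall i, f i - g i = z) ->
  \sum_(i < K) c i * ((f i)%:~R * m (i%:Z - j))
  - \sum_(i < K) c i * ((g i)%:~R * m (i%:Z - j)) = z%:~R * pr K c j.
Proof.
move=> e; rewrite -sumrB /pr mulr_sumr; apply: eq_bigr => i _.
by rewrite -mulrBr -mulrBl -intrB e mulrA -intrC mulrA.
Qed.

Definition S0 K (c : nat -> R) (k : int) (j : int) :=
  \sum_(i < K) c i * ((i%:Z - k)%:~R * m (i%:Z - j)).

Lemma regroup (x1 x2 y1 y2 z1 z2 : R) :
  -(al0 * x2 + al1 * y2 + al2 * z2) + al0 * x1 + al1 * y1 + al2 * z1
  = al0 * (x1 - x2) + al1 * (y1 - y2) + al2 * (z1 - z2).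
Proof.
rewrite !mulrBr !opprD; set A := al0 * x1; set B := al0 * x2; set C := al1 * y1.
set D := al1 * y2; set E := al2 * z1; set F := al2 * z2.
rewrite (addrACA A (-B) C (-D)) (addrACA (A + C) (-B + -D) E (-F)).
by rewrite -[LHS]addrA -[LHS]addrA [LHS]addrC !addrA.
Qed.

Lemma Zform k j :
  pr k.+4 (fun i => d (P k.+1 i)) j =
  - (al0 * S0 k.+4 (P k.+1) k.+1 j
     + al1 * (t k.+1 / t k) * (pr k.+3 (P k) (j - 1) - pr k.+4 (P k.+1) j)
     + al2 * (h k.+1 / h k) * pr k.+4 (P k) j).
Proof.
pose X i := d (P k.+1 i) + al0 * (P k.+1 i * (i%:Z - k.+1%:Z)%:~R)
   + al1 * (t k.+1 / t k) * (shift (P k) i - P k.+1 i) + al2 * (h k.+1 / h k) * P k i.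
have prX j' : pr k.+4 X j' = pr k.+4 (fun i => d (P k.+1 i)) j' + al0 * S0 k.+4 (P k.+1) k.+1 j'
     + al1 * (t k.+1 / t k) * (pr k.+3 (P k) (j' - 1) - pr k.+4 (P k.+1) j')
     + al2 * (h k.+1 / h k) * pr k.+4 (P k) j'.
  rewrite -pr_shift -prB -!prZ.
  have -> : al0 * S0 k.+4 (P k.+1) k.+1 j' =
      pr k.+4 (fun i => al0 * (P k.+1 i * (i%:Z - k.+1%:Z)%:~R)) j'.
    by rewrite /S0 /pr mulr_sumr; apply: eq_bigr => i _; rewrite !mulrA.
  by rewrite -!prD.
have X0 : forall i, X i = 0.
  apply: (@uniq0 k.+1 k.+4) => //.
    move=> i ki; rewrite /X dP_const // add0r.
    rewrite leq_eqVlt in ki; case/orP: ki => [/eqP <-|ki].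
      by rewrite /= !P_top (@P_hi k k.+1) // subrr mulr0z mulr0 subrr !mulr0 !addr0.
    case: i ki => [|i] // ki.
    by rewrite /= !P_hi // ?mul0r ?subrr ?mulr0 ?addr0.
  move=> j' jk; rewrite prX.
  have D := dpr k.+4 (P k.+1) j'; rewrite prP_orth // d0 in D.
  have -> : pr k.+4 (fun i => d (P k.+1 i)) j' = - (al0 * S0 k.+4 (P k.+1) j' j'
      + al1 * pr k.+4 (P k.+1) (j'%:Z - 1) + al2 * pr k.+4 (P k.+1) (j'%:Z + 1)).
    by apply/eqP; rewrite -subr_eq0 opprK !addrA -D.
  rewrite -[al1 * _ * _]mulrA -[al2 * _ * _]mulrA regroup.
  have -> : S0 k.+4 (P k.+1) k.+1 j' - S0 k.+4 (P k.+1) j' j' = 0.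
    by rewrite /S0 (@pr_intdiff k.+4 (P k.+1) j' (fun i => i%:Z - k.+1%:Z) (fun i => i%:Z - j'%:Z) (j'%:Z - k.+1%:Z)) ?prP_orth ?mulr0 // => i; lia.
  rewrite mulr0 add0r.
  have -> : t k.+1 / t k * (pr k.+3 (P k) (j'%:Z - 1) - pr k.+4 (P k.+1) j')
      - pr k.+4 (P k.+1) (j'%:Z - 1) = 0.
    case: j' jk {D} => [|j'] jk.
      rewrite (_ : (0%N)%:Z - 1 = -1) // !prP_t // (@prP_orth _ k.+1 0) //.
      by rewrite subr0 -mulrA mulVr ?unit_t // mulr1 subrr.
    rewrite (_ : (j'.+1)%:Z - 1 = j'%:Z); last by lia.
    by rewrite !prP_orth // subrr mulr0 subrr.
  have -> : h k.+1 / h k * pr k.+4 (P k) j' - pr k.+4 (P k.+1) (j'%:Z + 1) = 0.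
    rewrite ltnS leq_eqVlt in jk; case/orP: jk => [/eqP ->|jk].
      rewrite prP_h // (_ : k%:Z + 1 = (k.+1)%:Z); last by lia.
      by rewrite prP_h // -mulrA mulVr ?unit_h // mulr1 subrr.
    rewrite (_ : j'%:Z + 1 = (j'.+1)%:Z); last by lia.
    by rewrite !prP_orth // mulr0 subrr.
  by rewrite !mulr0 addr0.
have := prX j; rewrite pr0 // => E.
by apply/eqP; rewrite -subr_eq0 opprK !addrA -E.
Qed.



Lemma prW K K' k j : (k < K)%N -> (k < K')%N -> pr K (P k) j = pr K' (P k) j.
Proof. by move=> kK kK'; rewrite prP // prP. Qed.

Lemma S0_P0 K j : S0 K (P 0%N) 0 j = 0.
Proof.
rewrite /S0 big1 // => i _; case: (nat_of_ord i) => [|i'].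
  by rewrite subrr mulr0z mul0r mulr0.
by rewrite P_hi // mul0r.
Qed.

Lemma bmul k X Y : b k * X = Y -> X = (b k)^-1 * Y.
Proof. by move<-; rewrite mulrA mulVr ?unit_b ?mul1r. Qed.

Lemma tt_a k : t k.+1 / t k = - a k.+1.
Proof. by rewrite aE mulNr opprK. Qed.

Lemma T_eq k : d (t k) = al0 * ((k.+1)%:~R * t k)
   + al1 * (b k * t k - a k * t k + t k.+1) + al2 * ((b k)^-1 * t k).
Proof.
case: k => [|k].
  have D := dpr 3 (P 0%N) (-1).
  rewrite prP_t // pr0 ?add0r in D; last by move=> i; rewrite dP_const.
  rewrite D; have R0 := recur 0 (-1).
  rewrite mul0r addr0 !prP_t // in R0.
  rewrite (_ : -1 - 1 = (-1) - 1) // R0 (_ : -1 + 1 = (0%N)%:Z) // prP_h // .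
  have -> : \sum_(i < 3) P 0%N i * ((i%:Z - -1)%:~R * m (i%:Z - -1)) = 1%Z%:~R * t 0.
    transitivity (S0 3 (P 0%N) (-1) (-1) - S0 3 (P 0%N) 0 (-1)); first by rewrite S0_P0 subr0.
    rewrite -(@prP_t 3 0) //.
    by apply: (@pr_intdiff 3 (P 0%N) (-1) (fun i => i%:Z - -1) (fun i => i%:Z - 0) 1) => i; lia.
  rewrite (_ : a 0%N = 0) // mul0r subr0 [t 1 + _]addrC; congr (_ + _ * _).
  by apply: bmul; rewrite b0E -mulrA mulVr ?unit_h // mulr1.
have D := dpr k.+4 (P k.+1) (-1).
rewrite Zform !prP_t // in D; rewrite D.
rewrite -[al1 * _ * _]mulrA -[al2 * _ * _]mulrA regroup.
congr (_ + _ + _); congr (_ * _).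
- rewrite -(@prP_t k.+4 k.+1) //.
  by apply: (@pr_intdiff k.+4 (P k.+1) (-1) (fun i => i%:Z - -1) (fun i => i%:Z - k.+1%:Z) k.+2) => i; lia.
- have R0 := recur k.+1 (-1).
  rewrite !prP_t // in R0.
  rewrite (@prW k.+3 k.+4) // tt_a mulNr opprK mulrBr addrA R0.
  by rewrite -addrA addrC.
- rewrite (_ : -1 + 1 = (0%N)%:Z) // prP_orth // sub0r.
  apply: bmul; rewrite bE mulrN -!mulrA mulKr ?unit_h // mulVKr ?unit_h // mulVr ?unit_t // mulr1 opprK.
  by [].
Qed.


Lemma S0_P0' K : \sum_(i < K) P 0%N i * ((i%:Z - (0%N)%:Z)%:~R * m (i%:Z - (0%N)%:Z)) = 0.
Proof. exact: S0_P0. Qed.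

Lemma bhh k : b k.+1 * (h k.+1 / h k) = a k.+1.
Proof. by rewrite bE -!mulrA mulKr ?unit_h // mulrV ?unit_h // mulr1. Qed.

Lemma H_eq k : d (h k) = al1 * (b k * h k - a k * h k)
   + al2 * ((b k)^-1 * (h k - h k.+1)).
Proof.
case: k => [|k].
  have D := dpr 3 (P 0%N) (0%N)%:Z.
  rewrite prP_h // pr0 ?add0r in D; last by move=> i; rewrite dP_const.
  rewrite S0_P0' mulr0 add0r in D.
  rewrite D prP_t //.
  rewrite (_ : a 0%N = 0) // mul0r subr0 {1}b0E -mulrA mulVr ?unit_h // mulr1.
  congr (_ + _ * _); apply: bmul.
  have R0 := recur 0 1.
  rewrite (_ : a 0%N = 0) // mul0r addr0 in R0.
  rewrite (_ : (1 : int) - 1 = (0%N)%:Z) // (_ : (1 : int) = (1%N)%:Z) // !prP_h // in R0.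
  by rewrite R0 addrC addKr.
have D := dpr k.+4 (P k.+1) (k.+1)%:Z.
rewrite Zform !prP_h // in D; rewrite D.
rewrite -[al1 * _ * _]mulrA -[al2 * _ * _]mulrA regroup subrr mulr0 add0r.
congr (_ + _); congr (_ * _).
- rewrite (_ : (k.+1)%:Z - 1 = k%:Z); last by lia.
  rewrite prP_orth // (@prW k.+3 k.+4) // prP_h // sub0r tt_a mulNr opprK.
  by rewrite mulrBr bh.
- apply: bmul.
  have R0 := recur k.+1 (k.+2)%:Z.
  rewrite (_ : (k.+2)%:Z - 1 = (k.+1)%:Z) in R0; last by lia.
  rewrite !prP_h // in R0.
  rewrite (_ : (k.+1)%:Z + 1 = (k.+2)%:Z); last by lia.
  rewrite mulrBr mulrA bhh.
  rewrite [_.-1]/= in R0.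
  have -> : b k.+1 * pr k.+4 (P k.+1) k.+2 = h k.+1 + a k.+1 * pr k.+4 (P k) k.+1 - h k.+2.
    by rewrite R0 [h k.+2 + _]addrC addrK.
  by rewrite addrAC addrK.
Qed.


Definition L3 (x y z : R) := al0 * x + al1 * y + al2 * z.

Lemma L3M x y z w : L3 x y z * w = L3 (x * w) (y * w) (z * w).
Proof. by rewrite /L3 !mulrDl -!mulrA. Qed.
Lemma L3Ml w x y z : w * L3 x y z = L3 (w * x) (w * y) (w * z).
Proof. by rewrite /L3 !mulrDr !mulrA -c0 -c1 -c2 -!mulrA. Qed.
Lemma L3B x y z x' y' z' : L3 x y z - L3 x' y' z' = L3 (x - x') (y - y') (z - z').
Proof.
rewrite /L3 !mulrBr !opprD.
by rewrite (addrACA (_ + _) (al2 * z)) (addrACA (al0 * x)).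
Qed.
Lemma L3D x y z x' y' z' : L3 x y z + L3 x' y' z' = L3 (x + x') (y + y') (z + z').
Proof.
rewrite /L3 !mulrDr.
by rewrite (addrACA (_ + _) (al2 * z)) (addrACA (al0 * x)).
Qed.

Definition X k := L3 (k.+1)%:~R (b k - a k - a k.+1) (b k)^-1.
Definition Y k := L3 0 (b k - a k) ((b k)^-1 - (b k)^-1 * ((b k.+1)^-1 * a k.+1)).

Lemma dtX k : d (t k) = X k * t k.
Proof.
rewrite T_eq /X L3M /L3; congr (_ + _ + _); congr (_ * _).
by rewrite !mulrBl (at_prev k) opprK.
Qed.

Lemma dhY k : d (h k) = Y k * h k.
Proof.
rewrite H_eq /Y L3M /L3 mul0r mulr0 add0r; congr (_ + _); congr (_ * _).
  by rewrite mulrBl.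
rewrite (@bmul k.+1 _ _ (bh k)).
move: (b k)^-1 (b k.+1)^-1 (a k.+1) (h k) => u v w x.
by rewrite mulrBr mulrBl !mulrA.
Qed.


Lemma daX k : d (a k.+1) = X k.+1 * a k.+1 - a k.+1 * X k.
Proof.
rewrite {1}aE dM dN (dV _ (unit_t k)) !dtX aE.
have uT := unit_t k.
move: (X k.+1) (X k) (t k.+1) (t k) uT => X1 X0 t1 T uT.
rewrite !mulrN !mulNr opprK !mulrA mulrK // !mulrN !opprK !mulrA.
by [].
Qed.


Lemma dbY k : d (b k.+1) =
  X k.+1 * b k.+1 + a k.+1 * (Y k - X k) * (h k / h k.+1) - b k.+1 * Y k.+1.
Proof.
rewrite {1}bE dM dM (dV _ (unit_h k.+1)) daX !dhY bE.
have uH := unit_h k.+1.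
move: (X k.+1) (X k) (Y k.+1) (Y k) (a k.+1) (h k) (h k.+1) uH => X1 X0 Y1 Y0 A H0 H1 uH.
rewrite !(mulrDl, mulrBl, mulrBr, mulrDr, mulrN, mulNr) !mulrA mulrK //.
by congr (_ - _); rewrite -addrA (addrC (- _)).
Qed.


Lemma final_a k : d (a k.+1) = al0 * a k.+1
   + al1 * (- (a k.+2 * a k.+1) + a k.+1 * a k + b k.+1 * a k.+1 - a k.+1 * b k)
   + al2 * ((b k.+1)^-1 * a k.+1 - a k.+1 * (b k)^-1).
Proof.
rewrite daX /X L3M L3Ml L3B /L3; congr (_ + _ + _); congr (_ * _).
- move: (a k.+1) => A.
  rewrite intrC -mulrBr -intrB (_ : (k.+2)%:Z - (k.+1)%:Z = 1) ?mulr1 //; lia.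
- move: (a k.+2) (a k.+1) (a k) (b k.+1) (b k) => A2 A1 A0 B1 B0.
  rewrite !mulrBl !mulrBr !opprD !opprK !addrA.
  by rewrite [LHS](ACl ((3*5*1*4)*(2*6)))%AC /= addNr addr0.
Qed.


Lemma final_b k : d (b k.+1) = al0 * b k.+1
   + al1 * (b k.+1 * a k.+1 - a k.+2 * b k.+1)
   + al2 * ((b k.+2)^-1 * a k.+2 - a k.+1 * (b k)^-1).
Proof.
rewrite dbY /X /Y L3B L3Ml L3M L3M L3Ml L3D L3B /L3.
have E : a k.+1 * (h k / h k.+1) = b k.+1 by rewrite bE mulrA.
have uB := unit_b k.+1.
move: E uB; move: (h k / h k.+1) (a k.+1) (b k.+1) (a k.+2) (b k.+2)^-1 (a k) (b k) (b k)^-1 => HH A1 B1 A2 IB2 A0 B0 IB0 E uB.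
congr (_ + _ + _); congr (_ * _).
- rewrite mulr0 subr0 sub0r mulrN mulNr -[A1 * _]intrC -mulrA E -mulrBl -intrB.
  by rewrite (_ : (k.+2)%:Z - (k.+1)%:Z = 1) ?mul1r //; lia.
- rewrite subKr -mulrA E !mulrBl !mulrBr !opprD !opprK !addrA.
  by rewrite [LHS](ACl ((6*3)*(1*5)*(2*4)))%AC /= subrr addr0 addNr addr0.
- rewrite (addrAC IB0) subrr add0r mulrN mulNr -!mulrA E mulVr // mulr1.
  rewrite mulrBr mulrV // mulVKr // !opprD !opprK !addrA.
  by rewrite [LHS](ACl ((4*2)*(1*3)))%AC /= subrr addr0.
Qed.

End Work.

Theorem theorem3p3 (R : unitRingType) (d : R -> R) (m : int -> R)
    (Linv : forall n : nat, 'M[R]_n) (al0 al1 al2 : R) :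
  (* R is a skew field *)
  (forall x : R, x != 0 -> x \is a GRing.unit) ->
  (* d/dt is a derivation of R *)
  (forall x y : R, d (x + y) = d x + d y) ->
  (forall x y : R, d (x * y) = d x * y + x * d y) ->
  (* the alpha_i are scalars (central) *)
  (forall x : R, al0 * x = x * al0) ->
  (forall x : R, al1 * x = x * al1) ->
  (forall x : R, al2 * x = x * al2) ->
  al0 != 0 ->
  (* moment evolution *)
  (forall j : int,
      d (m j) = al0 * j%:~R * m j + al1 * m (j + 1) + al2 * m (j - 1)) ->
  (* Lambda_{n-1} invertible, with inverse Linv n *)
  (forall n : nat, Lam m n *m Linv n = 1%:M /\ Linv n *m Lam m n = 1%:M) ->
  (* the remaining required inverses exist *)
  (forall n : nat, taun m Linv n != 0) ->
  (forall n : nat, Hn m Linv n != 0) ->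
  (forall n : nat, bn m Linv n != 0) ->
  forall n : nat, (0 < n)%N ->
    let a := an m Linv in
    let b := bn m Linv in
    d (a n) = al0 * a n
              + al1 * (- (a n.+1 * a n) + a n * a n.-1 + b n * a n - a n * b n.-1)
              + al2 * ((b n)^-1 * a n - a n * (b n.-1)^-1)
 /\ d (b n) = al0 * b n
              + al1 * (b n * a n - a n.+1 * b n)
              + al2 * ((b n.+1)^-1 * a n.+1 - a n * (b n.-1)^-1).
Proof.
move=> uP dD dM c0 c1 c2 nz dm LP tN hN bN n n0 a b.
case: n n0 => [|k] // _.
rewrite /a /b; split.
  by apply: final_a.
by apply: final_b.
Qed.
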